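(* Let $p\equiv 1\pmod 4$ be a prime, let $\zeta=e^{2\pi\mathbf i/(p-1)}$, and let $g\in\{1,\ldots,p-1\}$ be an integer that is a primitive root modulo $p$. Suppose $\mathfrak p$ is a prime ideal of the ring of integers of $\mathbb Q(\zeta)$ lying above $p$ such that $g\equiv\zeta\pmod{\mathfrak p}$. Then $$\prod_{1\le i<j\le\frac{p-1}{2}}(g^{2j}-g^{2i})\equiv e^{\frac{(p-3)(3p+1)}{16}\pi\mathbf i}\cdot\Big(\frac{p-1}{2}\Big)^{\frac{p-1}{4}}\pmod{\mathfrak p}.$$
   Context: $\mathbf i=\sqrt{-1}$. (Note $e^{\frac{(p-3)(3p+1)}{16}\pi\mathbf i}$ is a root of unity lying in $\mathbb Q(\zeta)$ when $p\equiv1\pmod 4$.) *)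

(* Defs.v *)
From HB Require Import structures.
From mathcomp Require Import all_boot all_order all_algebra all_field.
Set Implicit Arguments. Unset Strict Implicit. Unset Printing Implicit Defensive.
Import Order.TTheory GRing.Theory Num.Theory.
Local Open Scope ring_scope.

(* e^{N pi i / d} in algC, for d > 0: d.-root (-1) is the d-th root of -1
   with minimal non-negative argument, i.e. e^{pi i / d}. *)
Definition expPi (N d : nat) : algC := (d.-root (-1)) ^+ N.

Definition inQadj (z x : algC) : Prop :=
  exists q : {poly rat}, x = (map_poly ratr q).[z].

Definition inOK (z x : algC) : Prop := inQadj z x /\ x \in Aint.

Definition prime_ideal_OK (z : algC) (P : algC -> Prop) : Prop :=
  (forall x, P x -> inOK z x) /\
  P 0 /\
  (forall x y, P x -> P y -> P (x + y)) /\
  (forall a x, inOK z a -> P x -> P (a * x)) /\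
  ~ P 1 /\
  (forall x y, inOK z x -> inOK z y -> P (x * y) -> P x \/ P y).

Definition lies_above (P : algC -> Prop) (p : nat) : Prop := P p%:R.

Definition congr_mod (P : algC -> Prop) (x y : algC) : Prop := P (x - y).

(* Main.v *)
Require Import Defs.
From HB Require Import structures.
From mathcomp Require Import all_boot all_order all_algebra all_field.
From mathcomp Require Import zify ring lra.
Import Order.TTheory GRing.Theory Num.Theory.
Local Open Scope ring_scope.


Lemma sum_id j : ((\sum_(1 <= i < j) i) * 2 + j = j * j)%N.
Proof.
elim: j => [|j IH]; first by rewrite big_geq.
case: j IH => [|j] IH; first by rewrite big_geq.
rewrite big_nat_recr //=; lia.
Qed.

Lemma sum_ij j : ((\sum_(1 <= i < j) (i + j)) * 2 + 3 * j = 3 * j * j)%N.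
Proof.
rewrite big_split /= sum_nat_const_nat.
have := sum_id j; case: j => [|j]; first by rewrite big_geq.
rewrite subSS subn0; lia.
Qed.

Lemma sumS n : ((\sum_(1 <= j < n.+1) \sum_(1 <= i < j) (i + j)) * 2 + n = n ^ 3)%N.
Proof.
elim: n => [|n IH]; first by rewrite big_geq.
rewrite big_nat_recr //=.
have := sum_ij n.+1. rewrite mulnDl.
move: IH; set a := (\sum_(1 <= j < n.+1) _)%N; set b := (\sum_(1 <= i < n.+1) _)%N.
rewrite !expnS expn0 => IH H. nia.
Qed.

Section V.
Variables (F : fieldType) (m : nat) (z : F).
Hypothesis hm : (0 < m)%N.
Hypothesis hz : (4 * m).-primitive_root z.
Let n := (2 * m)%N.

Lemma z4 : z ^+ (2 * n) = 1.
Proof. by rewrite /n mulnA (prim_expr_order hz). Qed.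

Lemma zn : z ^+ n = -1.
Proof.
have h2 : (z ^+ n) ^+ 2 = 1 by rewrite -exprM mulnC z4.
have : z ^+ n != 1.
  apply/eqP => h; have := prim_order_dvd hz n; rewrite h eqxx /n => H.
  have := dvdn_leq _ H; lia.
by move: h2 => /eqP; rewrite sqrf_eq1 => /orP[->|/eqP->].
Qed.

Definition t d := z ^+ d - z ^+ (2 * n - d).

Lemma factor_t i j : (i <= j <= n)%N ->
  z ^+ (2 * j) - z ^+ (2 * i) = z ^+ (i + j) * t (j - i).
Proof.
move=> /andP[hij hjn]; rewrite /t mulrBr -!exprD.
have -> : (i + j + (j - i) = 2 * j)%N by lia.
have -> : (i + j + (2 * n - (j - i)) = 2 * n + 2 * i)%N by lia.
by rewrite exprD z4 mul1r.
Qed.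

Lemma t_sym d : (d <= n)%N -> t (n - d) = t d.
Proof.
move=> hd; rewrite /t.
have -> : (2 * n - (n - d) = n + d)%N by lia.
have -> : (2 * n - d = n + (n - d))%N by lia.
rewrite (exprD z n d) (exprD z n (n - d)) zn; ring.
Qed.

Definition Fl l := \prod_(1 <= d < l.+1) t d.
Definition Pr := \prod_(1 <= d < n) t d.

Lemma Fl_pair l : (l < n)%N -> Fl l * Fl (n.-1 - l) = Pr.
Proof.
move=> hl; rewrite /Pr (big_cat_nat _ (n := l.+1)) //=; 
rewrite /Fl; congr (_ * _).
rewrite -(add1n l) big_addn big_nat_rev /=.
have -> : ((n.-1 - l).+1 = n - l)%N by rewrite /n; lia.
apply: eq_big_nat => i /andP [h1 h2].
have -> : (1 + (n - l) - i.+1 = n - (i + l))%N by lia.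
by rewrite t_sym //; lia.
Qed.

Lemma W_eq : \prod_(1 <= j < n.+1) \prod_(1 <= i < j) t (j - i) = Pr ^+ m.
Proof.
have -> : \prod_(1 <= j < n.+1) \prod_(1 <= i < j) t (j - i) =
          \prod_(0 <= l < n) Fl l.
  rewrite big_add1 /=; apply: eq_big_nat => l _.
  rewrite /Fl big_nat_rev /=; apply: eq_big_nat => i /andP[h1 h2].
  by congr t; lia.
rewrite /n (big_cat_nat _ (n := m)) //=; last by lia.
rewrite -{2}(add0n m) big_addn.
have -> : (2 * m - m = m)%N by lia.
rewrite big_nat_rev /= -big_split /= -(subn0 m) -prodr_const_nat subn0.
apply: eq_big_nat => l /andP [_ hl].
rewrite -(Fl_pair (m - l.+1)); last by rewrite /n; lia.
by rewrite add0n; congr (_ * Fl _); rewrite /n; lia.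
Qed.

Lemma Pr_zN : Pr * z ^+ (\sum_(1 <= d < n) d)%N = \prod_(1 <= d < n) ((z ^+ 2) ^+ d - 1).
Proof.
rewrite /Pr -prodrXr -big_split /=; apply: eq_big_nat => d /andP[h1 h2].
rewrite /t mulrBl -!exprD -exprM.
have -> : (2 * n - d + d = 2 * n)%N by rewrite /n; lia.
by rewrite z4 addnn -mul2n.
Qed.

Lemma prod_unity : \prod_(1 <= d < n) ((z ^+ 2) ^+ d - 1) = - (n%:R).
Proof.
have hw : n.-primitive_root (z ^+ 2).
  have := dvdn_prim_root hz (m := n); rewrite /n.
  have -> : (4 * m %/ (2 * m) = 2)%N 
    by rewrite (_ : 4 * m = 2 * (2 * m))%N ?mulnK //; lia.
  apply; apply/dvdnP; exists 2%N; lia.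
have n0 : (0 < n)%N by rewrite /n; lia.
have E := factor_Xn_sub_1 hw.
rewrite big_ltn // expr0 subrX1 in E.
rewrite -polyC1 in E.
have {}E := mulfI (negbT (polyXsubC_eq0 _)) E.
have Q1 : \prod_(1 <= d < n) (1 - (z ^+ 2) ^+ d) = n%:R.
  have := congr1 (fun q => q.[1]) E; rewrite /= horner_prod horner_sum.
  under [in X in _ = X -> _]eq_bigr do rewrite horner_exp hornerX expr1n.
  rewrite sumr_const card_ord => <-.
  by apply: eq_big_nat => i _; rewrite hornerXsubC.
have -> : \prod_(1 <= d < n) ((z ^+ 2) ^+ d - 1) = \prod_(1 <= d < n) (-1 * (1 - (z ^+ 2) ^+ d)).
  by apply: eq_big_nat => i _; rewrite mulN1r opprB.
rewrite big_split /= Q1 prodr_const_nat -signr_odd.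
have -> : odd (n - 1).
  by rewrite (_ : n - 1 = (2 * m.-1).+1)%N /= ?odd_mul //; rewrite /n; lia.
by rewrite expr1 mulN1r.
Qed.

Lemma expo_id : ((m * ((2 * m - 1) * (3 * m + 1)) + (\sum_(1 <= d < n) d) * m)
   = (\sum_(1 <= j < n.+1) \sum_(1 <= i < j) (i + j)) + n * m + 4 * m * (m * (m - 1)))%N.
Proof.
have h1 := sumS n; have h2 := sum_id n.
move: h1 h2; rewrite /n.
set S := (\sum_(1 <= j < _) _)%N; set N := (\sum_(1 <= i < _) _)%N.
case: m hm => // k _ h1 h2.
rewrite !expnS expn0 in h1.
nia.
Qed.

Lemma Vid : \prod_(1 <= j < n.+1) \prod_(1 <= i < j) (z ^+ (2 * j) - z ^+ (2 * i))
  = (z ^+ m) ^+ ((2 * m - 1) * (3 * m + 1)) * n%:R ^+ m.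
Proof.
have -> : \prod_(1 <= j < n.+1) \prod_(1 <= i < j) (z ^+ (2 * j) - z ^+ (2 * i))
   = \prod_(1 <= j < n.+1) (\prod_(1 <= i < j) z ^+ (i + j) * \prod_(1 <= i < j) t (j - i)).
  apply: eq_big_nat => j /andP[hj1 hj2]; rewrite -big_split /=.
  by apply: eq_big_nat => i /andP[hi1 hi2]; rewrite factor_t //; lia.
rewrite big_split /= W_eq.
under eq_big_nat => j _ do rewrite prodrXr.
rewrite prodrXr.
have z0 : z ^+ ((\sum_(1 <= d < n) d) * m) != 0.
  rewrite expf_neq0 //; apply/eqP => h; move: z4; rewrite h expr0n.
  have -> : (2 * n == 0)%N = false by rewrite /n; lia.
  by move/eqP; rewrite eq_sym oner_eq0.
apply: (mulIf z0).
set S := (\sum_(1 <= i < n.+1) _)%N; set N := (\sum_(1 <= d < n) d)%N.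
rewrite exprM -mulrA -exprMn Pr_zN prod_unity -mulN1r exprMn -zn.
rewrite -(exprM z n m) -(exprM z N m) -(exprM z m) mulrA -(exprD z S) mulrAC -exprD; congr (_ * _).
rewrite expo_id (_ : 4 * m = 2 * n)%N; last by rewrite /n; lia.
by rewrite [in RHS]exprD exprM z4 expr1n mulr1.
Qed.
End V.


Section L.
Variable k : nat.
Hypothesis hk : (0 < k)%N.
Let M := (2 * k)%N.
Let w : algC := M.-root (-1).

Lemma M0 : (0 < M)%N. Proof. by rewrite /M; lia. Qed.
Lemma M1 : (1 < M)%N. Proof. by rewrite /M; lia. Qed.

Lemma hw : w ^+ M = -1. Proof. exact: (rootCK M0). Qed.

Lemma rt_norm (z : algC) : z ^+ M = -1 -> `|z| = 1.
Proof.
move=> h; apply/eqP; rewrite -(pexpr_eq1 M0) ?normr_ge0 //.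
by rewrite -normrX h normrN normr1.
Qed.

Lemma rt_conj (z : algC) : z ^+ M = -1 -> z * z^* = 1.
Proof. by move=> h; rewrite -normCK rt_norm // expr1n. Qed.

Lemma rt_Im (z : algC) : z ^+ M = -1 -> 'Im z != 0.
Proof.
move=> h; apply/eqP => hi.
have zr : z \is Num.real by rewrite [z]algCrect hi mulr0 addr0 algCreal_Re.
have := real_exprn_even_ge0 (n := M) zr; rewrite h /M oddM /= => /(_ isT).
by rewrite oppr_ge0 ler10.
Qed.

Lemma rt_conj_rt (z : algC) : z ^+ M = -1 -> z^* ^+ M = -1.
Proof. by move=> h; rewrite -rmorphXn h rmorphN1. Qed.

Lemma Imw : 0 < 'Im w.
Proof. by rewrite lt_def rt_Im ?hw //= Im_rootC_ge0 // M1. Qed.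


Let g : {poly algC} := 'X^M + 1%:P.

Lemma g_sep : separable_poly g.
Proof.
rewrite unlock; apply/Bezout_coprimepP.
exists (1, - ((M%:R)^-1 *: 'X)) => /=.
rewrite /g derivD derivXn derivC addr0 mul1r.
have MR : M%:R != 0 :> algC by rewrite pnatr_eq0 -lt0n M0.
rewrite mulNr -scaler_nat -scalerAl -scalerAr scalerA mulVf // scale1r.
rewrite -exprS prednK ?M0 // addrC addKr; exact: eqpxx.
Qed.

Definition rs := sval (closed_field_poly_normal g).

Lemma g_eq : g = \prod_(z <- rs) ('X - z%:P).
Proof.
rewrite /rs; case: (closed_field_poly_normal g) => r /= {1}->.
by rewrite lead_coefXnaddC ?M0 // scale1r.
Qed.

Lemma rs_uniq : uniq rs.
Proof. by rewrite -separable_prod_XsubC -g_eq g_sep. Qed.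

Lemma mem_rs z : (z \in rs) = (z ^+ M == -1).
Proof.
by rewrite -root_prod_XsubC -g_eq /root /g !hornerE addr_eq0.
Qed.


Definition posI : pred algC := fun z => 0 <= 'Im z.
Definition U := [seq z <- rs | posI z].
Definition Lw := [seq z <- rs | ~~ posI z].

Lemma U_uniq : uniq U. Proof. exact: filter_uniq rs_uniq. Qed.

Lemma w_U : w \in U.
Proof.
by rewrite mem_filter /posI Im_rootC_ge0 ?M1 // mem_rs hw eqxx.
Qed.

Lemma Lw_perm : perm_eq Lw (map (fun z : algC => z^*) U).
Proof.
apply: uniq_perm; first exact: filter_uniq rs_uniq.
  by rewrite (map_inj_uniq (can_inj conjCK)) U_uniq.
move=> z; apply/idP/idP.
  rewrite mem_filter /posI -real_ltNge ?algCreal_Im ?rpred0 // mem_rs => /andP[hz /eqP hzr].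
  apply/mapP; exists z^*; last by rewrite conjCK.
  rewrite mem_filter /posI Im_conj oppr_ge0 (ltW hz) mem_rs rt_conj_rt //.
  by rewrite eqxx.
case/mapP => y; rewrite mem_filter /posI mem_rs => /andP[hy /eqP hyr] ->.
rewrite mem_filter /posI mem_rs rt_conj_rt // eqxx andbT Im_conj oppr_ge0 -real_ltNge ?algCreal_Im ?rpred0 //.
by rewrite lt_def hy andbT; apply: rt_Im.
Qed.

Lemma size_rs : size rs = M.
Proof.
have h : size g = M.+1 by rewrite size_XnaddC ?M0.
by rewrite g_eq size_prod_XsubC in h; case: h.
Qed.

Lemma size_U : size U = k.
Proof.
have := count_predC posI rs; rewrite size_rs -!size_filter -/U.
rewrite (perm_size Lw_perm) size_map /M; lia.
Qed.


Lemma w_rs : w \in rs. Proof. by rewrite mem_rs hw. Qed.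
Lemma posI_w : posI w. Proof. by rewrite /posI Im_rootC_ge0 ?M1. Qed.

Lemma Q_eval : w ^+ M.-1 *+ M = \prod_(z <- rs | z != w) (w - z).
Proof.
have E : g = ('X - w%:P) * \prod_(z <- rs | z != w) ('X - z%:P).
  by rewrite g_eq (bigD1_seq w) ?w_rs ?rs_uniq.
have := congr1 (fun p => (p^`()).[w]) E.
rewrite /= derivM derivXsubC mul1r hornerD hornerM hornerXsubC subrr mul0r addr0 horner_prod.
rewrite /g derivD derivXn derivC addr0 hornerMn horner_exp hornerX => ->.
by apply: eq_bigr => z _; rewrite hornerXsubC.
Qed.

Lemma pair_fact y : y ^+ M = -1 ->
  (w - y) * (w - y^*) = w * (2 * ('Re w - 'Re y)).
Proof.
move=> hy; have yy := rt_conj _ hy; have ww := rt_conj _ hw.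
rewrite !ReE; apply/eqP; rewrite -subr_eq0; apply/eqP.
have -> : (w - y) * (w - y^*) - w * (2 * ((w + w^*) / 2 - (y + y^*) / 2)) =
   y * y^* - w * w^*.
  by field.
exact: (etrans (congr2 (fun a b => a - b) yy ww) (subrr 1)).
Qed.

Lemma delta_pos y : y \in U -> y != w -> 0 < 2 * ('Re w - 'Re y).
Proof.
rewrite mem_filter mem_rs /posI => /andP[hy /eqP hyr] ny.
rewrite pmulr_rgt0 ?ltr0n // subr_gt0 lt_def rootC_Re_max ?M0 // andbT.
apply: contraNneq ny => hre.
have hn : 'Im y ^+ 2 = 'Im w ^+ 2.
  have h1 := normC2_Re_Im y; have h2 := normC2_Re_Im w.
  rewrite rt_norm // expr1n in h1; rewrite rt_norm ?hw // expr1n in h2.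
  by apply: (addrI ('Re w ^+ 2)); rewrite -h2 hre -h1.
have : 'Im y == 'Im w by rewrite -(eqrXn2 (n := 2)) // ?hn // ltW ?Imw.
by move/eqP => him; apply/eqP; rewrite [y]algCrect [w in _ = w]algCrect -hre him.
Qed.


Lemma Q_split : \prod_(z <- rs | z != w) (w - z) =
  (w - w^*) * (w ^+ k.-1 * \prod_(y <- U | y != w) (2 * ('Re w - 'Re y))).
Proof.
rewrite (bigID posI) /=.
have -> : \prod_(z <- rs | (z != w) && posI z) (w - z) = \prod_(z <- U | z != w) (w - z).
  by rewrite big_filter_cond; apply: eq_bigl => z; rewrite andbC.
have -> : \prod_(z <- rs | (z != w) && ~~ posI z) (w - z) = \prod_(z <- Lw) (w - z).
  rewrite big_filter; apply: eq_bigl => z; case: eqP => // ->; by rewrite posI_w.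
rewrite (perm_big _ Lw_perm) big_map (bigD1_seq w) ?w_U ?U_uniq //=.
rewrite mulrCA -big_split /=; congr (_ * _).
rewrite big_seq_cond (eq_bigr (fun y => w * (2 * ('Re w - 'Re y)))); last first.
  move=> y /andP[]; rewrite mem_filter mem_rs => /andP[_ /eqP hy] _.
  exact: pair_fact.
rewrite big_split /= -big_seq_cond; congr (_ * _).
  rewrite (eq_bigr (fun _ => w ^+ 1)); last by move=> *; rewrite expr1.
  rewrite prodrXr sum1_count; congr (_ ^+ _).
  have := count_predC (pred1 w) U; rewrite count_uniq_mem ?U_uniq // w_U size_U.
  by move=> <-.
by rewrite -big_seq_cond.
Qed.


Lemma rootN1_k : w ^+ k = 'i.
Proof.
set D := \prod_(y <- U | y != w) (2 * ('Re w - 'Re y)).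
have Dp : 0 < D.
  by rewrite /D big_seq_cond; apply: prodr_gt0 => y /andP[]; apply: delta_pos.
have key := Q_eval; rewrite Q_split -/D in key.
have wc : w - w^* = 2 * 'i * 'Im w.
  rewrite ImE; transitivity ('i ^+ 2 * (w^* - w)).
    by rewrite sqrCi mulN1r opprB.
  by field.
have hk2 : (w ^+ k) ^+ 2 = -1 by rewrite -exprM mulnC hw.
have : (w ^+ k - 'i) * (w ^+ k + 'i) = 0 by rewrite -subr_sqr hk2 sqrCi subrr.
move/eqP; rewrite mulf_eq0 => /orP[/eqP h|/eqP h]; first by apply/eqP; rewrite -subr_eq0 h.
exfalso.
have hwk : w ^+ k = - 'i by apply/eqP; rewrite -addr_eq0 h.
have := congr1 (fun x => w * x) key.
rewrite /= mulrnAr -exprS prednK ?M0 // hw (mulrCA w) (mulrA w) -exprS prednK // hwk wc.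
move=> e.
have e2 : - (M%:R : algC) = 2 * 'Im w * D * (- ('i * 'i)).
  rewrite -mulNrn e; ring.
rewrite -expr2 sqrCi opprK mulr1 in e2.
have : 0 < 2 * 'Im w * D by rewrite mulr_gt0 // mulr_gt0 // Imw.
by rewrite -e2 oppr_gt0 ltrn0.
Qed.

End L.


Lemma natz_intr (R : pzRingType) (n : nat) : ((n%:Z)%:~R : R) = n%:R.
Proof. by []. Qed.

Lemma prod_transfer (R : comPzRingType) (g N : nat) :
  ((\prod_(1 <= j < N) \prod_(1 <= i < j) ((g ^ (2 * j))%:Z - (g ^ (2 * i))%:Z))%:~R : R)
  = \prod_(1 <= j < N) \prod_(1 <= i < j) ((g ^ (2 * j))%:R - (g ^ (2 * i))%:R).
Proof.
rewrite rmorph_prod; apply: eq_bigr => j _; rewrite rmorph_prod; apply: eq_bigr => i _.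
by rewrite rmorphB /= !natz_intr.
Qed.

Section OK.
Variable z : algC.

Lemma inQadjD x y : inQadj z x -> inQadj z y -> inQadj z (x + y).
Proof. by move=> [q1 ->] [q2 ->]; exists (q1 + q2); rewrite rmorphD hornerD. Qed.

Lemma inQadjM x y : inQadj z x -> inQadj z y -> inQadj z (x * y).
Proof. by move=> [q1 ->] [q2 ->]; exists (q1 * q2); rewrite rmorphM hornerM. Qed.

Lemma inQadj_int (a : int) : inQadj z a%:~R.
Proof. by exists (a%:~R)%:P; rewrite map_polyC hornerC /= ratr_int. Qed.

Lemma inQadj_z : inQadj z z.
Proof. by exists 'X; rewrite map_polyX hornerX. Qed.

Lemma inOKD x y : inOK z x -> inOK z y -> inOK z (x + y).
Proof. by move=> [h1 h2] [h3 h4]; split; [apply: inQadjD | apply: rpredD]. Qed.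

Lemma inOKM x y : inOK z x -> inOK z y -> inOK z (x * y).
Proof. by move=> [h1 h2] [h3 h4]; split; [apply: inQadjM | apply: rpredM]. Qed.

Lemma inOK_int (a : int) : inOK z a%:~R.
Proof. by split; [apply: inQadj_int | apply: Aint_int]. Qed.

Lemma inOK_nat (a : nat) : inOK z a%:R.
Proof. by rewrite -natz_intr; apply: inOK_int. Qed.

Lemma inOKX x e : inOK z x -> inOK z (x ^+ e).
Proof.
move=> h; elim: e => [|e IH]; first by rewrite expr0; apply: (inOK_nat 1).
by rewrite exprS; apply: inOKM.
Qed.
End OK.

Theorem lemma2p2 (p g : nat) (P : algC -> Prop) :
  prime p -> (p %% 4 = 1)%N ->
  let zeta : algC := expPi 2 p.-1 in
  (1 <= g <= p.-1)%N ->
  (p.-1).-primitive_root (g%:R : 'F_p) ->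
  prime_ideal_OK zeta P -> lies_above P p ->
  congr_mod P g%:R zeta ->
  congr_mod P
    (\prod_(1 <= j < (p.-1 %/ 2).+1) \prod_(1 <= i < j)
        ((g ^ (2 * j))%:R - (g ^ (2 * i))%:R))
    (expPi ((p - 3) * (3 * p + 1)) 16 * ((p.-1 %/ 2)%:R) ^+ (p.-1 %/ 4)).
Proof.
move=> hp hp4 zeta hg hprim hPid habove hcong.
case: hPid => [Hsub [H0 [Hadd [Hmul [H1 Hprime]]]]].
have p2 := prime_gt1 hp.
set m := (p.-1 %/ 4)%N.
have hp1 : p.-1 = (4 * m)%N by rewrite /m; lia.
have m0 : (0 < m)%N by lia.
have hn : (p.-1 %/ 2 = 2 * m)%N by rewrite hp1; lia.
rewrite hn.
set E := ((2 * m - 1) * (3 * m + 1))%N.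
set c : algC := (2 * m)%:R ^+ m.
rewrite hp1 in hprim.
have VF := @Vid _ _ _ m0 hprim.
set X := (\prod_(1 <= j < (2 * m).+1) \prod_(1 <= i < j) ((g ^ (2 * j))%:Z - (g ^ (2 * i))%:Z))%R.
set D : int := X - (g ^ (m * E) * (2 * m) ^ m)%:Z.
have hD : (D%:~R : 'F_p) = 0.
  rewrite rmorphB /= prod_transfer natz_intr natrM !natrX.
  rewrite (eq_bigr (fun j => \prod_(1 <= i < j) ((g%:R : 'F_p) ^+ (2 * j) - (g%:R) ^+ (2 * i)))); last first.
    by move=> j _; apply: eq_bigr => i _; rewrite !natrX.
  by rewrite VF (exprM _ m E) subrr.
have /dvdzP [q hq] : (p %| D)%Z by rewrite (dvdz_pcharf (pchar_Fp hp)) hD.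
have PD : P (D%:~R : algC).
  by rewrite hq rmorphM /= natz_intr; apply: Hmul habove; apply: inOK_int.
have eD : (D%:~R : algC) = \prod_(1 <= j < (2 * m).+1) \prod_(1 <= i < j)
        ((g ^ (2 * j))%:R - (g ^ (2 * i))%:R) - (g%:R) ^+ (m * E) * c.
  by rewrite rmorphB /= prod_transfer natz_intr natrM !natrX.
have hpm : p = (4 * m).+1 by rewrite -hp1 prednK //; lia.
have hzeta4 : zeta ^+ (4 * m) = 1.
  rewrite /zeta /expPi -exprM mulnC exprM hp1 rootCK; last by lia.
  by rewrite expr2 mulN1r opprK.
have zOK : inOK zeta zeta.
  split; first exact: inQadj_z.
  by apply: (@Aint_unity_root (4 * m)); [lia | rewrite unity_rootE hzeta4].
have hi1 : zeta ^+ (m * E) = 'i ^+ E.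
  rewrite /zeta /expPi hp1 -exprM (_ : 4 * m = 2 * (2 * m))%N; last by lia.
  rewrite (_ : 2 * (m * E) = (2 * m) * E)%N; last by rewrite mulnA.
  by rewrite exprM rootN1_k //; lia.
have hi2 : expPi ((p - 3) * (3 * p + 1)) 16 = 'i ^+ E.
  rewrite /expPi (_ : (p - 3) * (3 * p + 1) = 8 * E)%N; last by rewrite hpm /E; nia.
  by rewrite exprM (_ : 16 = 2 * 8)%N // rootN1_k.
have Pg : P ((g%:R) ^+ (m * E) - zeta ^+ (m * E)).
  rewrite subrXX mulrC; apply: Hmul hcong.
  apply: (big_ind (inOK zeta)); first exact: (inOK_nat _ 0).
    by move=> x y; apply: inOKD.
  by move=> i _; apply: inOKM; apply: inOKX => //; apply: inOK_nat.
rewrite /congr_mod hi2.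
have -> : \prod_(1 <= j < (2 * m).+1) \prod_(1 <= i < j) ((g ^ (2 * j))%:R - (g ^ (2 * i))%:R) - 'i ^+ E * c
   = (D%:~R : algC) + c * ((g%:R) ^+ (m * E) - zeta ^+ (m * E)).
  by rewrite eD hi1; ring.
apply: Hadd PD _; apply: Hmul Pg; apply: inOKX; apply: inOK_nat.
Qed.
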